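(* Every finite word that occurs as a factor of $\mathbf{t}_{3/2}$ occurs in $\mathbf{t}_{3/2}$ both at some even position and at some odd position.
   Context: The Thue--Morse word in base $3/2$ is the unique binary sequence $\mathbf{t}_{3/2}=(t_n)_{n\ge0}$ with $t_0=0$, $t_{3n}=t_{3n+1}=t_{2n}$ and $t_{3n+2}=1-t_{2n+1}$ for all $n\ge0$ (equivalently, $t_n$ is the digit sum modulo $2$ of the base-$3/2$ expansion of $n$, where $\langle 0\rangle$ is empty and $\langle n\rangle=\langle m\rangle d$ for $2n=3m+d$, $d\in\{0,1,2\}$). A word $u$ occurs at position $i$ if $t_it_{i+1}\cdots t_{i+|u|-1}=u$. *)

(* Defs.v *)
From mathcomp Require Import all_boot.

(* Base-3/2 expansion: <0> is empty, <n> = <m> d where 2n = 3m + d, d in {0,1,2}.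
   So m = (2n) %/ 3 and d = (2n) %% 3; for n >= 1, m < n.
   [digsum32_fuel k n] computes the digit sum of <n> provided k >= n. *)
Fixpoint digsum32_fuel (k n : nat) : nat :=
  match k with
  | 0 => 0
  | k'.+1 => if n == 0 then 0
             else digsum32_fuel k' ((n.*2) %/ 3) + (n.*2) %% 3
  end.

Definition digsum32 (n : nat) : nat := digsum32_fuel n n.

Definition t32 (n : nat) : bool := odd (digsum32 n).

Definition occurs_at (u : seq bool) (i : nat) : Prop :=
  forall j, j < size u -> t32 (i + j) = nth false u j.

Definition is_factor (u : seq bool) : Prop := exists i, occurs_at u i.

(* Main.v *)
Require Import Defs.
From mathcomp Require Import all_boot.
From mathcomp Require Import zify.

Definition phi (n : nat) : nat := n.*2 %/ 3.

Lemma phi_lt n : 0 < n -> phi n < n.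
Proof. rewrite /phi => Hn. lia. Qed.

Lemma fuel_eq k1 k2 n : n <= k1 -> n <= k2 -> digsum32_fuel k1 n = digsum32_fuel k2 n.
Proof.
elim: k1 k2 n => [|k1 IH] [|k2] n /= H1 H2 //.
- by move: H1; rewrite leqn0 => /eqP ->.
- by move: H2; rewrite leqn0 => /eqP ->.
case: eqP => // /eqP Hn.
have Hp : phi n < n by apply: phi_lt; rewrite lt0n. rewrite /phi in Hp.
rewrite (IH k2) //; lia.
Qed.

Lemma t_rec n : t32 n = t32 (phi n) (+) (n %% 3 == 2).
Proof.
rewrite /t32 /digsum32.
case: n => [|n] //.
rewrite [digsum32_fuel n.+1 n.+1]/= /=.
have Hp := phi_lt n.+1 isT.
rewrite (fuel_eq n (phi n.+1)) //.
rewrite -/(phi n.+1) oddD; congr (_ (+) _).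
have H3 : n.+1 %% 3 < 3 by rewrite ltn_mod.
have : n.+1.*2 %% 3 = (n.+1 %% 3).*2 %% 3 by lia.
move=> ->. move: H3; case: (n.+1 %% 3) => [|[|[|r]]] //.
Qed.

Lemma phi_shift n z : phi (n + 3 * z) = phi n + 2 * z.
Proof. rewrite /phi. lia. Qed.

Lemma t_shift1 n z : t32 (n + 3 * z) (+) t32 n = t32 (phi n + 2 * z) (+) t32 (phi n).
Proof.
rewrite (t_rec (n + 3 * z)) (t_rec n) phi_shift.
have -> : (n + 3 * z) %% 3 = n %% 3 by lia.
by case: (t32 _); case: (t32 _); case: (_ == _).
Qed.

Lemma t_shift k n E :
  t32 (n + 3 ^ k * E) (+) t32 n = t32 (iter k phi n + 2 ^ k * E) (+) t32 (iter k phi n).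
Proof.
elim: k n E => [|k IH] n E; first by [].
rewrite iterSr.
have -> : 3 ^ k.+1 * E = 3 * (3 ^ k * E) by rewrite expnS mulnA.
rewrite t_shift1.
have -> : 2 * (3 ^ k * E) = 3 ^ k * (2 * E) by rewrite mulnCA.
by rewrite IH mulnA -expnSr.
Qed.

Lemma iter_phi0 k n : n <= k -> iter k phi n = 0.
Proof.
elim: k n => [|k IH] n Hn; first by move: Hn; rewrite leqn0 => /eqP ->.
rewrite iterSr; apply: IH.
case: n Hn => [|n] Hn; first by rewrite /phi.
have := phi_lt n.+1 isT. lia.
Qed.

Definition occ (u : seq bool) (i : nat) (b : bool) :=
  forall j, j < size u -> t32 (i + j) = nth false u j (+) b.

Lemma shift_occ u i b E :
  occ u i b -> occ u (i + 3 ^ (i + size u) * E) (b (+) t32 (2 ^ (i + size u) * E)).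
Proof.
move=> H j Hj.
have := t_shift (i + size u) (i + j) E.
rewrite iter_phi0; last lia.
rewrite add0n (H j Hj) addnAC.
have -> : t32 0 = false by [].
clear H; by case: (t32 _); case: (t32 _); case: b; case: (nth _ _ _).
Qed.

Lemma lemA M : exists w, t32 (2 ^ M * w).
Proof.
set k := M.+2.
have cop : coprime (3 ^ k) (2 ^ M) by apply: coprimeXl; apply: coprimeXr.
set x := chinese (3 ^ k) (2 ^ M) 0 (2 ^ M * 2 - 2).
have Hx1 := chinese_modl cop 0 (2 ^ M * 2 - 2).
have Hx2 := chinese_modr cop 0 (2 ^ M * 2 - 2).
rewrite -/x mod0n in Hx1. rewrite -/x in Hx2.
have d3 : 3 ^ k %| x by rewrite /dvdn Hx1.
have d2 : 2 ^ M %| 2 + x.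
  have P0 : 0 < 2 ^ M by rewrite expn_gt0.
  rewrite /dvdn -modnDmr Hx2 modnDmr.
  have -> : 2 + (2 ^ M * 2 - 2) = 2 ^ M * 2 by lia.
  by rewrite modnMr.
have HE : x = 3 ^ k * (x %/ 3 ^ k) by rewrite mulnC divnK.
have := t_shift k 2 (x %/ 3 ^ k).
rewrite iter_phi0 // -HE add0n.
have -> : t32 0 = false by [].
have -> : t32 2 = true by vm_compute.
case E2 : (t32 (2 ^ k * (x %/ 3 ^ k))).
  move=> _; exists (4 * (x %/ 3 ^ k)); rewrite mulnA.
  by have -> : 2 ^ M * 4 = 2 ^ k by rewrite /k !expnS; lia.
move=> H; exists ((2 + x) %/ 2 ^ M); rewrite mulnC divnK //.
by move: H; case: (t32 _).
Qed.

Lemma flip u i : occ u i false -> exists i', odd i' = ~~ odd i /\ occ u i' false.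
Proof.
move=> H.
have H1 := @shift_occ u i false 1 H. rewrite !muln1 addFb in H1.
case Ht : (t32 (2 ^ (i + size u))) H1 => H1.
  set i1 := i + 3 ^ (i + size u) in H1.
  have [w Hw] := lemA (i1 + size u).+1.
  have H2 := @shift_occ u _ _ (2 * w) H1.
  rewrite [2 ^ _ * (2 * w)]mulnA -expnSr Hw /= in H2.

  exists (i1 + 3 ^ (i1 + size u) * (2 * w)); split => //.
  by rewrite oddD oddM oddM /= andbF addbF /i1 oddD oddX /= orbT addbT.
exists (i + 3 ^ (i + size u)); split => //.
by rewrite oddD oddX orbT addbT.
Qed.

Theorem proposition14 (u : seq bool) :
  is_factor u ->
  (exists i, ~~ odd i /\ occurs_at u i) /\ (exists i, odd i /\ occurs_at u i).
Proof.
case=> i Hi.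
have Ho : occ u i false by move=> j Hj; rewrite addbF; apply: Hi.
have [i' [Hp Ho']] := @flip u i Ho.
have Hi' : occurs_at u i' by move=> j Hj; rewrite (Ho' j Hj) addbF.
case Hodd : (odd i).
  split; [exists i'; rewrite Hp Hodd | exists i; rewrite Hodd]; by [].
split; [exists i; rewrite Hodd | exists i'; rewrite Hp Hodd]; by [].
Qed.
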